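(* Let $\mathcal H$ be a family of graphs. The following are equivalent: (i) there are constants $c_1=c_1(\mathcal H)$ and $c_2=c_2(\mathcal H)$ such that every $\mathcal H$-free graph $G$ has fewer than $c_2$ vertices $v$ with $\mathrm{sdeg}(v)\ge c_1$; (ii) there is a positive integer $n$ such that $\mathcal H\le\{nK_{1,n},\ G_n\}$.
   Context: All graphs are finite, simple, undirected. For graphs $H_1,H_2$, write $H_1\prec H_2$ if $H_2$ contains an induced subgraph isomorphic to $H_1$. A graph $G$ is $\mathcal H$-free if no $H\in\mathcal H$ satisfies $H\prec G$. For families $\mathcal H_1,\mathcal H_2$, write $\mathcal H_1\le\mathcal H_2$ if for every $H_2\in\mathcal H_2$ there is $H_1\in\mathcal H_1$ with $H_1\prec H_2$. For a vertex $v$ of $G$, the sharp degree is $\mathrm{sdeg}(v)=c(G-v)-c(G)+1$, where $c(\cdot)$ is the number of connected components. $K_{1,n}$ is the star with $n$ leaves, $nG$ the disjoint union of $n$ copies of $G$, and $G_n$ is the graph obtained from $K_n$ by attaching $n$ new pendant vertices to each vertex of $K_n$. *)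

(* Defs.v *)
From mathcomp Require Import all_boot.
Set Implicit Arguments. Unset Strict Implicit. Unset Printing Implicit Defensive.

Record sgraph := SGraph {
  vert : finType;
  adj : rel vert;
  adj_sym : symmetric adj;
  adj_irr : irreflexive adj }.

Definition induced_sub (H1 H2 : sgraph) : Prop :=
  exists f : vert H1 -> vert H2,
    injective f /\ forall x y, @adj H2 (f x) (f y) = @adj H1 x y.

Definition Hfree (F : sgraph -> Prop) (G : sgraph) : Prop :=
  forall H, F H -> ~ induced_sub H G.

Definition fam_le (F1 F2 : sgraph -> Prop) : Prop :=
  forall H2, F2 H2 -> exists H1, F1 H1 /\ induced_sub H1 H2.

Definition ncomp (G : sgraph) : nat :=
  #|[set [set y | connect (@adj G) x y] | x : vert G]|.

Section Del.
Variables (G : sgraph) (v : vert G).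
Definition delV : finType := {x : vert G | x != v}.
Definition del_adj : rel delV := fun x y => @adj G (val x) (val y).
Lemma del_sym : symmetric del_adj.
Proof. by move=> x y; rewrite /del_adj adj_sym. Qed.
Lemma del_irr : irreflexive del_adj.
Proof. by move=> x; rewrite /del_adj adj_irr. Qed.
Definition delv : sgraph := SGraph del_sym del_irr.
End Del.

(* sharp degree sdeg(v) = c(G - v) - c(G) + 1; this quantity is always
   >= 0, so truncated nat subtraction computes it exactly. *)
Definition sdeg (G : sgraph) (v : vert G) : nat :=
  (ncomp (delv v)).+1 - ncomp G.

(* the star K_{1,n}: vertex 0 is the centre, 1..n are leaves *)
Definition star_adj (n : nat) : rel 'I_n.+1 :=
  fun a b => (val a == 0) != (val b == 0).
Lemma star_sym (n : nat) : symmetric (@star_adj n).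
Proof. by move=> a b; rewrite /star_adj eq_sym. Qed.
Lemma star_irr (n : nat) : irreflexive (@star_adj n).
Proof. by move=> a; rewrite /star_adj eqxx. Qed.
Definition star (n : nat) : sgraph := SGraph (@star_sym n) (@star_irr n).

Section Copies.
Variables (n : nat) (G : sgraph).
Definition cp_adj : rel ('I_n * vert G)%type :=
  fun p q => (p.1 == q.1) && @adj G p.2 q.2.
Lemma cp_sym : symmetric cp_adj.
Proof. by move=> p q; rewrite /cp_adj eq_sym adj_sym. Qed.
Lemma cp_irr : irreflexive cp_adj.
Proof. by move=> p; rewrite /cp_adj adj_irr andbF. Qed.
Definition copies : sgraph := SGraph cp_sym cp_irr.
End Copies.

(* G_n : K_n on vertices (i, None), with n pendant vertices (i, Some k),
   k < n, attached to each clique vertex (i, None). *)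
Definition Gn_adj (n : nat) : rel ('I_n * option 'I_n)%type :=
  fun p q => match p.2, q.2 with
             | None, None => p.1 != q.1
             | None, Some _ | Some _, None => p.1 == q.1
             | Some _, Some _ => false
             end.
Lemma Gn_sym (n : nat) : symmetric (@Gn_adj n).
Proof. by move=> [i [a|]] [j [b|]]; rewrite /Gn_adj //= eq_sym. Qed.
Lemma Gn_irr (n : nat) : irreflexive (@Gn_adj n).
Proof. by move=> [i [a|]]; rewrite /Gn_adj //= eqxx. Qed.
Definition Gn (n : nat) : sgraph := SGraph (@Gn_sym n) (@Gn_irr n).

(* Main.v *)
Require Import Defs.
From mathcomp Require Import all_boot zify.
From Stdlib Require Import Classical.
Set Implicit Arguments. Unset Strict Implicit. Unset Printing Implicit Defensive.

Lemma connect_inv (T : finType) (r : rel T) (P : pred T) x y :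
  (forall a b, P a -> r a b -> P b) -> P x -> connect r x y -> P y.
Proof.
move=> h px /connectP[p pp ->]; elim: p x px pp => //= z p IH x px /andP[rz pp].
exact: IH (h _ _ px rz) pp.
Qed.

Lemma connect_map (T1 T2 : finType) (r1 : rel T1) (r2 : rel T2) (f : T1 -> T2) :
  (forall x y, r1 x y -> r2 (f x) (f y)) ->
  forall x y, connect r1 x y -> connect r2 (f x) (f y).
Proof.
move=> h x y /connectP[p pp ->]; elim: p x pp => [|z p IH] x /=; first by rewrite connect0.
case/andP=> rz pp; exact: connect_trans (connect1 (h _ _ rz)) (IH _ pp).
Qed.

Definition cls (T : finType) (r : rel T) x := [set y | connect r x y].

Lemma cls_eq (T : finType) (r : rel T) : symmetric r ->
  forall x y, connect r x y -> cls r x = cls r y.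
Proof.
move=> rs x y cxy; apply/setP=> z; rewrite /cls !inE; apply/idP/idP => h.
- apply: connect_trans _ h; by rewrite (sym_connect_sym rs).
- exact: connect_trans cxy h.
Qed.

Lemma cls_conn (T : finType) (r : rel T) x y : cls r x = cls r y -> connect r x y.
Proof. move=> h; have: y \in cls r y by rewrite /cls inE connect0. by rewrite -h /cls inE. Qed.

Lemma no_nbr_connect (T : finType) (r : rel T) x y :
  (forall z, ~~ r x z) -> symmetric r -> connect r x y -> x = y.
Proof.
move=> h rs c; have := @connect_inv _ r (pred1 x) x y; rewrite /= eqxx.
move=> H; apply/eqP; rewrite eq_sym; apply: H => // a b /eqP -> rb.
by have := h b; rewrite rb.
Qed.

Lemma card_classes_le (T U W : finType) (A : {pred T}) (F : T -> U) (F' : T -> W) :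
  {in A &, forall x y, F x = F y -> F' x = F' y} -> #|F' @: A| <= #|F @: A|.
Proof.
move=> h; case: (pickP A) => [x0 x0A|A0]; last first.
  rewrite (_ : F' @: A = set0) ?cards0 //; apply/setP=> z; rewrite inE.
  apply/imsetP => -[x xA]; move: (A0 x) xA; rewrite unfold_in => -> //.
pose g S := if [pick x in A | F x == S] is Some x then F' x else F' x0.
have ->: F' @: A = g @: (F @: A).
  rewrite -imset_comp; apply: eq_in_imset => x xA /=; rewrite /g.
  case: pickP => [y /andP[yA /eqP Fy]|/(_ x)]; last by rewrite xA eqxx.
  exact: h.
exact: leq_imset_card.
Qed.

Lemma card_classes_eq (T U W : finType) (A : {pred T}) (F : T -> U) (F' : T -> W) :
  {in A &, forall x y, F x = F y <-> F' x = F' y} -> #|F' @: A| = #|F @: A|.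
Proof.
move=> h; apply/eqP; rewrite eqn_leq !card_classes_le // => x y xA yA; by case: (h x y xA yA).
Qed.

Section Gen.
Variable G : sgraph.
Local Notation V := (vert G).
Local Notation e := (@adj G).

Definition Rv (v : V) : rel V := fun x y => [&& x != v, y != v & e x y].
Lemma Rv_sym v : symmetric (Rv v).
Proof. by move=> x y; rewrite /Rv adj_sym andbA andbA (andbC (x != v)). Qed.
Lemma Rv_sub v x y : connect (Rv v) x y -> connect e x y.
Proof. by apply: (connect_map (f := id)) => a b /and3P[]. Qed.
Lemma e_sym : symmetric e. Proof. exact: adj_sym. Qed.

Lemma conn_del (v : V) (x y : delV v) :
  connect (@adj (delv v)) x y = connect (Rv v) (val x) (val y).
Proof.
apply/idP/idP.
- apply: (connect_map (f := val)) => a b ab; by rewrite /Rv (valP a) (valP b).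
- move=> c; rewrite -(valKd x x) -(valKd x y).
  apply: (connect_map (f := insubd x)) c => a b /and3P[av bv ab].
  by rewrite /= /del_adj !insubdK.
Qed.

Definition Pv (v : V) := [set cls (Rv v) (val x) | x : delV v].

Lemma ncomp_del v : ncomp (delv v) = #|Pv v|.
Proof.
rewrite /ncomp /Pv; symmetry; apply: card_classes_eq => x y _ _; split => h.
- apply: cls_eq; first exact: Rv_sym.
  by rewrite -conn_del; apply: cls_conn h.
- apply: (@cls_eq _ (@adj (delv v))); first exact: (@adj_sym (delv v)).
  by rewrite conn_del; apply: cls_conn.
Qed.

End Gen.

Section Gen2.
Variable G : sgraph.
Local Notation V := (vert G).
Local Notation e := (@adj G).

Definition Nb (v : V) := [set y | e v y].
Definition rep (v : V) (S : {set V}) := odflt v [pick y in Nb v | cls (Rv v) y == S].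
Definition reps (v : V) := [set rep v S | S in cls (Rv v) @: Nb v].

Lemma repP v S : S \in cls (Rv v) @: Nb v -> rep v S \in Nb v /\ cls (Rv v) (rep v S) = S.
Proof.
case/imsetP=> y yN ->; rewrite /rep; case: pickP => [z /andP[zN /eqP ->]|/(_ y)] //=.
by rewrite yN eqxx.
Qed.

Lemma reps_nb v x : x \in reps v -> e v x.
Proof. by case/imsetP=> S /repP[]; rewrite inE => h _ ->. Qed.

Lemma reps_sep v x y : x \in reps v -> y \in reps v -> connect (Rv v) x y -> x = y.
Proof.
case/imsetP=> S1 h1 ->; case/imsetP=> S2 h2 -> c.
have [_ e1] := repP h1; have [_ e2] := repP h2.
suff -> : S1 = S2 by [].
by rewrite -e1 -e2; apply: cls_eq (@Rv_sym G v) _ _ c.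
Qed.

Lemma card_reps v : #|reps v| = #|cls (Rv v) @: Nb v|.
Proof.
apply: card_in_imset => S1 S2 h1 h2 eq.
have [_ e1] := repP h1; have [_ e2] := repP h2; by rewrite -e1 -e2 eq.
Qed.

Lemma key v x z : x != v -> [forall y, e v y ==> ~~ connect (Rv v) x y] ->
  connect e x z -> (z != v) && connect (Rv v) x z.
Proof.
move=> xv hx c.
apply: (@connect_inv _ e [pred w | (w != v) && connect (Rv v) x w] x z _ _ c);
  last by rewrite /= xv connect0.
move=> a b /= /andP[av ca] ab.
have bv : b != v.
  apply/negP=> /eqP bv; move: ab; rewrite bv => ab.
  by move/forallP: hx => /(_ a); rewrite adj_sym ab ca.
rewrite bv; apply: connect_trans ca (connect1 _); by rewrite /Rv av bv ab.
Qed.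

Lemma sdeg_le v : sdeg v <= #|reps v|.
Proof.
rewrite /sdeg ncomp_del card_reps.
have -> : ncomp G = #|[set cls e x | x : V]| by [].
set N := Nb v; set Bx := [set x | (x != v) && [forall y, e v y ==> ~~ connect (Rv v) x y]].
have h1 : Pv v \subset cls (Rv v) @: N :|: cls (Rv v) @: Bx.
  apply/subsetP=> S /imsetP[x _ ->]; rewrite inE.
  case: (boolP [forall y, e v y ==> ~~ connect (Rv v) (val x) y]) => hx.
  - apply/orP; right; apply/imsetP; exists (val x) => //; by rewrite inE (valP x) hx.
  - apply/orP; left; move/forallPn: hx => [y]; rewrite negb_imply negbK => /andP[vy cy].
    apply/imsetP; exists y; [by rewrite inE | exact: cls_eq (@Rv_sym G v) _ _ cy].
have h2 : #|cls (Rv v) @: Bx| <= #|cls e @: Bx|.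
  apply: card_classes_le => x y; rewrite !inE => /andP[xv hx] _ hxy.
  apply: cls_eq (@Rv_sym G v) _ _ _.
  by case/andP: (key xv hx (cls_conn hxy)).
have h3 : cls e @: Bx \subset [set cls e x | x : V] :\ cls e v.
  apply/subsetP=> S /imsetP[x]; rewrite inE => /andP[xv hx] ->.
  rewrite !inE imset_f ?andbT ?inE //; apply/eqP => eqv.
  by have := key xv hx (cls_conn eqv); rewrite eqxx.
have h4 := cardsD1 (cls e v) [set cls e x | x : V]; rewrite imset_f ?inE // in h4.
have := subset_leq_card h1; have := cardsUI (cls (Rv v) @: N) (cls (Rv v) @: Bx).
have := subset_leq_card h3; lia.
Qed.

Lemma sdeg_ge v (X : {set V}) : (forall x, x \in X -> e v x) ->
  (forall x y, x \in X -> y \in X -> connect (Rv v) x y -> x = y) -> #|X| <= sdeg v.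
Proof.
move=> hX sX; rewrite /sdeg ncomp_del.
have -> : ncomp G = #|[set cls e x | x : V]| by [].
set Y := [set y | ~~ connect e v y].
have Xv : forall x, x \in X -> x != v.
  move=> x /hX; apply: contraTneq => ->; by rewrite adj_irr.
have Yv : forall y, y \in Y -> y != v.
  move=> y; rewrite inE; apply: contraNneq => ->; exact: connect0.
have inPv : forall x, x != v -> cls (Rv v) x \in Pv v.
  move=> x xv; apply/imsetP; by exists (exist _ x xv).
have h1 : cls (Rv v) @: X :|: cls (Rv v) @: Y \subset Pv v.
  apply/subsetP=> S; rewrite inE => /orP[]/imsetP[x xA ->]; apply: inPv;
    [exact: Xv | exact: Yv].
have h2 : #|cls (Rv v) @: X| = #|X|.
  apply: card_in_imset => x y xX yX exy; apply: sX => //; exact: cls_conn.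
have h3 : #|cls e @: Y| <= #|cls (Rv v) @: Y|.
  apply: card_classes_le => x y _ _ exy; apply: cls_eq (@adj_sym G) _ _ _.
  exact: Rv_sub (cls_conn exy).
have h4 : [set cls e x | x : V] :\ cls e v \subset cls e @: Y.
  apply/subsetP => S; rewrite !inE => /andP[Sv /imsetP[z _ Sz]].
  apply/imsetP; exists z => //; rewrite inE; apply: contra Sv => c.
  by rewrite Sz (cls_eq (@adj_sym G) c).
have h5 : cls (Rv v) @: X :&: cls (Rv v) @: Y = set0.
  apply/setP=> S; rewrite !inE; apply/negP => /andP[/imsetP[x xX ->] /imsetP[y yY exy]].
  move: yY; rewrite inE => /negP; apply.
  apply: connect_trans (connect1 (hX x xX)) _; exact: Rv_sub (cls_conn exy).
have h6 := cardsD1 (cls e v) [set cls e x | x : V]; rewrite imset_f ?inE // in h6.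
have := subset_leq_card h1; have := cardsUI (cls (Rv v) @: X) (cls (Rv v) @: Y).
rewrite h5 cards0 h2; have := subset_leq_card h4; lia.
Qed.

End Gen2.

Section Ram.
Variable G : sgraph.
Local Notation V := (vert G).
Local Notation e := (@adj G).

Definition homog (b : bool) (s : seq V) :=
  forall x y, x \in s -> y \in s -> x != y -> e x y = b.

Lemma ramsey a b (S : {set V}) : 2 ^ (a + b) <= #|S| ->
  (exists s, [/\ uniq s, size s = a, {subset s <= S} & homog true s]) \/
  (exists s, [/\ uniq s, size s = b, {subset s <= S} & homog false s]).
Proof.
elim: a b S => [|a IHa] b S hS.
  by left; exists [::]; split => // x y; rewrite in_nil.
elim: b S hS => [|b IHb] S hS.
  by right; exists [::]; split => // x y; rewrite in_nil.
have: 0 < #|S| by apply: leq_trans hS; rewrite expn_gt0.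
case/card_gt0P => x xS.
set N := [set y in S | e x y]; set M := [set y in S | (y != x) && ~~ e x y].
have hNM : #|S| <= (#|N| + #|M|).+1.
  have : S \subset x |: (N :|: M).
    apply/subsetP=> y yS; rewrite !inE yS /=; case: eqP => //= _; by case: (e x y).
  move/subset_leq_card; rewrite cardsU1; have := cardsUI N M.
  case: (x \notin N :|: M) => /=; lia.
have k : a.+1 + b.+1 = (a + b.+1).+1 by lia.
have k2 : a.+1 + b = a + b.+1 by lia.
rewrite k expnS in hS.
case: (leqP (2 ^ (a + b.+1)) #|N|) => hN.
- case: (IHa b.+1 N hN) => [[s [us ss sN hs]]|[s [us ss sN hs]]].
  + left; exists (x :: s); split.
    * rewrite /= us andbT; apply/negP=> /sN; by rewrite inE adj_irr andbF.
    * by rewrite /= ss.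
    * move=> y; rewrite inE => /orP[/eqP->//|/sN]; rewrite inE; by case/andP.
    * rewrite /homog => w z; rewrite !inE => /orP[/eqP->|ws] /orP[/eqP->|zs]; first by rewrite eqxx.
      - by move=> _; move: (sN z zs); rewrite inE => /andP[_ ->].
      - by move=> _; move: (sN w ws); rewrite inE adj_sym => /andP[_ ->].
      - exact: hs.
  + right; exists s; split => // y /sN; rewrite inE; by case/andP.
- have hM : 2 ^ (a.+1 + b) <= #|M| by rewrite k2; lia.
  case: (IHb M hM) => [[s [us ss sM hs]]|[s [us ss sM hs]]].
  + left; exists s; split => // y /sM; rewrite inE; by case/andP.
  + right; exists (x :: s); split.
    * rewrite /= us andbT; apply/negP=> /sM; by rewrite inE eqxx andbF.
    * by rewrite /= ss.
    * move=> y; rewrite inE => /orP[/eqP->//|/sM]; rewrite inE; by case/andP.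
    * rewrite /homog => y z; rewrite !inE => /orP[/eqP->|ys] /orP[/eqP->|zs]; first by rewrite eqxx.
      - move=> _; move: (sM z zs); rewrite inE => /andP[_ /andP[_ h]]; exact: negbTE.
      - move=> _; move: (sM y ys); rewrite inE adj_sym => /andP[_ /andP[_ h]]; exact: negbTE.
      - exact: hs.
Qed.
End Ram.

Section Emb.
Variables (G : sgraph) (n : nat) (b : bool) (c : 'I_n -> vert G) (l : 'I_n -> 'I_n -> vert G).
Local Notation e := (@adj G).
Hypotheses (h1 : injective c) (hb : forall i i', e (c i) (c i') = b && (i != i'))
 (h2 : forall i j, e (c i) (l i j))
 (h3 : forall i j j', connect (Rv (c i)) (l i j) (l i j') -> j = j')
 (h4 : forall i i' j, i' != i -> ~~ connect (Rv (c i)) (l i j) (c i')).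

Lemma lc_neq i j : l i j != c i.
Proof. by apply: contraTneq (h2 i j) => ->; rewrite adj_irr. Qed.

Lemma L1 i i' j : i' != i -> e (l i j) (c i') = false.
Proof.
move=> ne; apply/negP => ex.
have r : Rv (c i) (l i j) (c i') by rewrite /Rv lc_neq (inj_eq h1) ne ex.
by move: (h4 j ne); rewrite (connect1 r).
Qed.

Lemma L2 i i' j : i' != i -> l i j != c i'.
Proof. move=> ne; apply/eqP => eq; by move: (h4 j ne); rewrite -eq connect0. Qed.

Lemma P3b i i' j : c i' != l i j.
Proof.
rewrite eq_sym; case: (eqVneq i' i) => [->|ne]; [exact: lc_neq | exact: L2].
Qed.

Lemma P3a i i' j : e (c i') (l i j) = (i == i').
Proof.
case: (eqVneq i' i) => [->|ne]; first by rewrite h2 ?eqxx.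
by rewrite adj_sym L1 // eq_sym (negbTE ne).
Qed.

Lemma P2a i j i' j' : l i j = l i' j' -> i = i' /\ j = j'.
Proof.
move=> eq; have ii : i = i'.
  by apply/eqP; rewrite -(P3a i i' j) eq P3a eqxx.
subst i'; split => //; apply: (h3 (i := i)); by rewrite eq connect0.
Qed.

Lemma P2b i j i' j' : e (l i j) (l i' j') = false.
Proof.
apply/negP => ex; case: (eqVneq i' i) => [eqi|ne].
- subst i'; have r : Rv (c i) (l i j) (l i j') by rewrite /Rv !lc_neq ex.
  have jj := h3 (connect1 r); subst j'; by rewrite adj_irr in ex.
- have ne' : i != i' by rewrite eq_sym.
  have r1 : Rv (c i) (l i j) (l i' j') by rewrite /Rv lc_neq (L2 j' ne') ex.
  have r2 : Rv (c i) (l i' j') (c i') by rewrite /Rv (L2 j' ne') (inj_eq h1) ne adj_sym h2.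
  by move: (h4 j ne); rewrite (connect_trans (connect1 r1) (connect1 r2)).
Qed.

Definition fS (p : 'I_n * 'I_n.+1) : vert G :=
  if unlift ord0 p.2 is Some j then l p.1 j else c p.1.

Lemma emb_star : b = false -> induced_sub (copies n (star n)) G.
Proof.
move=> b0; exists fS; split.
- move=> [i a] [i' a'] /=; rewrite /fS /=.
  case: unliftP => [j ->|->]; case: unliftP => [j' ->|->] => eq.
  + by case: (P2a eq) => -> ->.
  + by move: (P3b i i' j); rewrite eq eqxx.
  + by move: (P3b i' i j'); rewrite eq eqxx.
  + by rewrite (h1 eq).
- move=> [i a] [i' a']; rewrite /fS /= /cp_adj /star_adj /=.
  case: unliftP => [j ->|->]; case: unliftP => [j' ->|->] /=; rewrite ?lift0 /=.
  + by rewrite P2b andbF.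
  + by rewrite adj_sym P3a andbT.
  + by rewrite P3a eq_sym andbT.
  + by rewrite hb b0 andbF.
Qed.

Definition fG (p : 'I_n * option 'I_n) : vert G :=
  if p.2 is Some j then l p.1 j else c p.1.

Lemma emb_Gn : b = true -> induced_sub (Gn n) G.
Proof.
move=> b1; exists fG; split.
- move=> [i [j|]] [i' [j'|]]; rewrite /fG /= => eq.
  + by case: (P2a eq) => -> ->.
  + by move: (P3b i i' j); rewrite eq eqxx.
  + by move: (P3b i' i j'); rewrite eq eqxx.
  + by rewrite (h1 eq).
- move=> [i [j|]] [i' [j'|]]; rewrite /fG /Gn_adj /=.
  + by rewrite P2b.
  + by rewrite adj_sym P3a.
  + by rewrite P3a eq_sym.
  + by rewrite hb b1.
Qed.
End Emb.

Lemma build (G : sgraph) (n : nat) (b : bool) (x0 : vert G) (s : seq (vert G)) :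
  uniq s -> size s = n -> homog b s -> (forall v, v \in s -> n + n <= sdeg v) ->
  induced_sub (if b then Gn n else copies n (star n)) G.
Proof.
move=> us ss hs hd.
pose c (i : 'I_n) := nth x0 s i.
have cs : forall i, c i \in s by move=> i; rewrite mem_nth // ss.
have h1 : injective c.
  move=> i i' /eqP; rewrite nth_uniq ?ss // => /eqP; exact: val_inj.
have hb : forall i i', adj (c i) (c i') = b && (i != i').
  move=> i i'; case: (eqVneq i i') => [->|ne]; first by rewrite adj_irr andbF.
  rewrite andbT; apply: hs => //; by rewrite (inj_eq h1).
pose F (v : vert G) := [set x in reps v |
   [forall y, ((y \in s) && (y != v)) ==> ~~ connect (Rv v) x y]].
have hF : forall v, v \in s -> n <= #|F v|.
  move=> v vs; pose D := reps v :\: F v.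
  pose h x := odflt v [pick y | (y \in s) && (y != v) && connect (Rv v) x y].
  have hD : forall x, x \in D -> [/\ h x \in s, h x != v & connect (Rv v) x (h x)].
    move=> x /setDP[xr xF].
    have : ~~ [forall y, ((y \in s) && (y != v)) ==> ~~ connect (Rv v) x y].
      by move: xF; rewrite inE xr.
    case/forallPn => y; rewrite negb_imply negbK => /andP[/andP[ys yv] cy].
    rewrite /h; case: pickP => [z /andP[/andP[zs zv] cz]|/(_ y)] //=.
    by rewrite ys yv cy.
  have hinj : {in D &, injective h}.
    move=> x x' xD x'D eq.
    have [_ _ c1] := hD x xD; have [_ _ c2] := hD x' x'D.
    apply: (@reps_sep _ v); [by case/setDP: xD | by case/setDP: x'D | ].
    apply: connect_trans c1 _; rewrite eq (sym_connect_sym (@Rv_sym _ v)); exact: c2.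
  have cD : #|D| <= n.
    rewrite -(card_in_imset hinj) -ss -(card_uniqP us); apply: subset_leq_card.
    by apply/subsetP => y /imsetP[x xD ->]; have [? _ _] := hD x xD.
  have := cardsD (reps v) (F v).
  have -> : reps v :&: F v = F v.
    by apply/setIidPr; apply/subsetP => x; rewrite inE => /andP[].
  have := sdeg_le v; have := hd v vs; rewrite -/D; lia.
pose l (i j : 'I_n) := nth x0 (enum (F (c i))) j.
have lF : forall i j, l i j \in F (c i).
  move=> i j; rewrite -mem_enum mem_nth // -cardE.
  exact: leq_trans (ltn_ord j) (hF _ (cs i)).
have h2 : forall i j, adj (c i) (l i j).
  move=> i j; have := lF i j; rewrite inE => /andP[/reps_nb //].
have h3 : forall i j j', connect (Rv (c i)) (l i j) (l i j') -> j = j'.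
  move=> i j j' cn; have := lF i j; rewrite inE => /andP[r1 _].
  have := lF i j'; rewrite inE => /andP[r2 _].
  have := reps_sep r1 r2 cn; move/eqP; rewrite /l nth_uniq ?enum_uniq // -?cardE.
  + by move/eqP; apply: val_inj.
  + exact: leq_trans (ltn_ord j) (hF _ (cs i)).
  + exact: leq_trans (ltn_ord j') (hF _ (cs i)).
have h4 : forall i i' j, i' != i -> ~~ connect (Rv (c i)) (l i j) (c i').
  move=> i i' j ne; have := lF i j; rewrite inE => /andP[_ /forallP /(_ (c i'))].
  by rewrite cs (inj_eq h1) ne.
case: b hb {hs} => hb.
- exact: (emb_Gn h1 hb h2 h3 h4).
- exact: (emb_star h1 hb h2 h3 h4).
Qed.

Lemma induced_trans A B C : induced_sub A B -> induced_sub B C -> induced_sub A C.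
Proof.
move=> [f [fi fa]] [g [gi ga]]; exists (g \o f); split; first exact: inj_comp.
by move=> x y /=; rewrite ga fa.
Qed.

Lemma star_sdeg N (i : 'I_N) : N <= @sdeg (copies N (star N)) (i, ord0).
Proof.
pose X := [set ((i, lift ord0 j) : vert (copies N (star N))) | j : 'I_N].
have cX : #|X| = N.
  rewrite card_imset ?card_ord // => j j' [] h; apply: val_inj => /=; lia.
rewrite -{1}cX; apply: sdeg_ge.
- move=> x /imsetP[j _ ->]; by rewrite /= /cp_adj /= /star_adj /= eqxx ?lift0.
- move=> x y /imsetP[j _ ->] _ cn.
  apply: (no_nbr_connect _ (@Rv_sym _ _) cn) => -[i' a'].
  rewrite /Rv /= /cp_adj /= /star_adj /=.
  have -> : (bump 0 j == 0) = false by rewrite /bump leq0n.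
  apply/and4P => -[_ ne /eqP ii a0]; move: ne; rewrite -ii.
  have -> : a' = ord0 by apply: val_inj => /=; move: a0; case: (val a').
  by rewrite eqxx.
Qed.

Lemma Gn_sdeg N (i : 'I_N) : N <= @sdeg (Gn N) (i, None).
Proof.
pose X := [set ((i, Some j) : vert (Gn N)) | j : 'I_N].
have cX : #|X| = N.
  by rewrite card_imset ?card_ord // => j j' [].
rewrite -{1}cX; apply: sdeg_ge.
- move=> x /imsetP[j _ ->]; by rewrite /= /Gn_adj /= eqxx.
- move=> x y /imsetP[j _ ->] _ cn.
  apply: (no_nbr_connect _ (@Rv_sym _ _) cn) => -[i' [a'|]];
    rewrite /Rv /= /Gn_adj /= ?andbF //.
  by apply/and3P => -[_ ne /eqP ii]; move: ne; rewrite -ii eqxx.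
Qed.

Theorem theorem1p14 (H : sgraph -> Prop) :
  (exists c1 c2 : nat, forall G : sgraph, Hfree H G ->
      #|[set v : vert G | c1 <= sdeg v]| < c2)
  <->
  (exists n : nat, 0 < n /\
     fam_le H (fun X => X = copies n (star n) \/ X = Gn n)).
Proof.
split.
- case=> c1 [c2 hc]; exists (c1 + c2 + 1); split; first lia.
  set N := c1 + c2 + 1.
  move=> H2 hH2; apply: NNPP => nex.
  have free : Hfree H H2.
    by move=> H1 hH1 sub; apply: nex; exists H1.
  have := hc H2 free; case: hH2 => ->.
  + have sub : [set ((i, ord0) : vert (copies N (star N))) | i : 'I_N]
        \subset [set v | c1 <= sdeg v].
      apply/subsetP => x /imsetP[i _ ->]; rewrite inE.
      by apply: leq_trans (star_sdeg i); lia.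
    have := subset_leq_card sub; rewrite card_imset ?card_ord; first lia.
    by move=> i j [].
  + have sub : [set ((i, None) : vert (Gn N)) | i : 'I_N]
        \subset [set v | c1 <= sdeg v].
      apply/subsetP => x /imsetP[i _ ->]; rewrite inE.
      by apply: leq_trans (Gn_sdeg i); lia.
    have := subset_leq_card sub; rewrite card_imset ?card_ord; first lia.
    by move=> i j [].
- case=> n [n0 hle]; exists (n + n), (2 ^ (n + n)) => G free.
  rewrite ltnNge; apply/negP => hS.
  have : 0 < #|[set v : vert G | n + n <= sdeg v]|.
    by apply: leq_trans hS; rewrite expn_gt0.
  case/card_gt0P => x0 _.
  have hd : forall s : seq (vert G), {subset s <= [set v : vert G | n + n <= sdeg v]} ->
      forall v, v \in s -> n + n <= sdeg v.
    by move=> s sS v /sS; rewrite inE.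
  case: (ramsey hS) => [[s [us ss sS hs]]|[s [us ss sS hs]]].
  + have emb := build x0 us ss hs (hd s sS).
    have [H1 [hH1 sub]] := hle (Gn n) (or_intror erefl).
    exact: free hH1 (induced_trans sub emb).
  + have emb := build x0 us ss hs (hd s sS).
    have [H1 [hH1 sub]] := hle (copies n (star n)) (or_introl erefl).
    exact: free hH1 (induced_trans sub emb).
Qed.
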